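(* Let $q\geq r$ be positive integers with $r>\frac{2q}{3}$. Then $F_{q,r}(n)=G_{q,r}(n)$ for every positive integer $n$.
   Context: $[n]=\{1,\dots,n\}$. For $x,y\in\mathbb{R}^q$, write $x<_r y$ if there are at least $r$ coordinates $i\in[q]$ with $x_i<y_i$. $F_{q,r}(n)$ is the maximum $N$ such that there exist $x_1,\dots,x_N\in[n]^q$ with $x_a<_r x_b$ for all $1\leq a<b\leq N$. $G_{q,r}(n)$ is the maximum size of a set $S\subseteq[n]^q$ such that for all distinct $x,y\in S$, either $x<_r y$ or $y<_r x$. *)

(* Defs.v *)
From mathcomp Require Import all_boot.
Set Implicit Arguments. Unset Strict Implicit. Unset Printing Implicit Defensive.

(* A point of [n]^q is a finite function 'I_q -> 'I_n ; the value k : 'I_n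
   represents the integer k+1 in [n] = {1,...,n} (a shift preserving order). *)
Definition point (q n : nat) := {ffun 'I_q -> 'I_n}.

Definition ltr (q n r : nat) (x y : point q n) : bool :=
  r <= #|[set i : 'I_q | x i < y i]|.

Definition rchain (q n r : nat) (s : seq (point q n)) : bool :=
  pairwise (@ltr q n r) s.

Definition rcomparable (q n r : nat) (S : {set point q n}) : bool :=
  [forall x in S, forall y in S, (x != y) ==> (ltr r x y || ltr r y x)].

Definition is_F (q r n N : nat) : Prop :=
  (exists s : seq (point q n), rchain r s /\ size s = N) /\
  (forall s : seq (point q n), rchain r s -> size s <= N).

Definition is_G (q r n N : nat) : Prop :=
  (exists S : {set point q n}, rcomparable r S /\ #|S| = N) /\
  (forall S : {set point q n}, rcomparable r S -> #|S| <= N).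

(* Main.v *)
Require Import Defs.
From mathcomp Require Import all_boot.
From mathcomp Require Import zify.

Section S.
Variables (q r n : nat).
Hypothesis r0 : 0 < r.
Hypothesis h23 : 2 * q < 3 * r.

Lemma three_inter (A B C : {set 'I_q}) :
  r <= #|A| -> r <= #|B| -> r <= #|C| -> exists i, i \in A :&: B :&: C.
Proof.
move=> hA hB hC.
have h1 := cardsUI A B. have h2 := cardsUI (A :&: B) C.
have u1 : #|A :|: B| <= q by apply: leq_trans (max_card _) _; rewrite card_ord.
have u2 : #|A :&: B :|: C| <= q by apply: leq_trans (max_card _) _; rewrite card_ord.
have : 0 < #|A :&: B :&: C| by lia.
by rewrite card_gt0 => /set0Pn.
Qed.

Lemma no_cycle (x y z : point q n) :
  ltr r x y -> ltr r y z -> ltr r z x -> False.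
Proof.
rewrite /ltr => a b c.
have [i] := three_inter _ _ _ a b c.
by rewrite !inE => /andP[/andP[h1 h2] h3]; lia.
Qed.

Lemma ltr_irr (x : point q n) : ~~ ltr r x x.
Proof.
rewrite /ltr -ltnNge.
suff -> : [set i : 'I_q | x i < x i] = set0 by rewrite cards0.
by apply/setP => i; rewrite !inE ltnn.
Qed.

Definition le (x y : point q n) := (x == y) || ltr r x y.

Lemma chain_comp (s : seq (point q n)) : rchain r s ->
  uniq s /\ forall x y, x \in s -> y \in s -> x != y -> ltr r x y || ltr r y x.
Proof.
elim: s => [|a t IH] //=.
rewrite /rchain /= => /andP[/allP ha ht].
have [ut ct] := IH ht.
split.
  rewrite ut andbT; apply/negP => /ha; by rewrite (negbTE (ltr_irr a)).
move=> x y; rewrite !inE => /orP[/eqP->|xt] /orP[/eqP->|yt] ne.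
- by rewrite eqxx in ne.
- by rewrite ha.
- by rewrite ha ?orbT.
- exact: ct.
Qed.

Lemma pairwise_le_ltr (s : seq (point q n)) : uniq s -> pairwise le s -> pairwise (ltr r) s.
Proof.
elim: s => [|a t IH] //= /andP[na ut] /andP[/allP ha ht].
rewrite IH // andbT; apply/allP => y yt.
have := ha y yt; rewrite /le => /orP[/eqP e|//].
by rewrite e yt in na.
Qed.

Lemma comp_chain (S : {set point q n}) : rcomparable r S ->
  exists s : seq (point q n), rchain r s /\ size s = #|S|.
Proof.
move=> /forall_inP cS.
have tot : {in S &, total le}.
  move=> x y xS yS; rewrite /le.
  case: (eqVneq x y) => [->|ne]; first by [].
  by move: (implyP ((forall_inP (cS x xS)) y yS) ne) => /orP[->|->]; rewrite ?orbT.
have tr : {in S & &, transitive le}.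
  move=> y x z yS xS zS; rewrite /le.
  case: (eqVneq x y) => [->//|_] /=.
  case: (eqVneq y z) => [->|_] /=; first by move->; rewrite orbT.
  move=> hxy hyz.
  case: (eqVneq x z) => [//|ne] /=.
  move: (implyP ((forall_inP (cS x xS)) z zS) ne).
  case/orP=> // hzx; exfalso; exact: (no_cycle _ _ _ hxy hyz hzx).
have allS : all (mem S) (enum S) by apply/allP => x; rewrite mem_enum.
have pe : perm_eq (sort le (enum S)) (enum S) by rewrite perm_sort perm_refl.
have allS' : all (mem S) (sort le (enum S)) by rewrite (perm_all _ pe).
exists (sort le (enum S)); split; last by rewrite (perm_size pe) cardE.
apply: pairwise_le_ltr; first by rewrite (perm_uniq pe) enum_uniq.
by rewrite -(sorted_pairwise_in tr allS'); exact: (sort_sorted_in tot allS).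
Qed.

End S.

Theorem proposition1p3 (q r : nat) :
  0 < r -> r <= q -> 2 * q < 3 * r ->
  forall n : nat, 0 < n ->
  exists N : nat, is_F q r n N /\ is_G q r n N.
Proof.
move=> r0 rq h23 n n0.
pose P := fun S : {set point q n} => rcomparable r S.
have P0 : P set0 by apply/forall_inP => x; rewrite inE.
have cP : 0 < #|P| by apply/card_gt0P; exists set0.
have [S0 PS0 eS0] := eq_bigmax_cond (fun S : {set point q n} => #|S|) cP.
set N := \max_(S in P) #|S| in eS0.
have ub : forall S, P S -> #|S| <= N by move=> S PS; rewrite /N (bigD1 S) ?leq_maxl.
exists N; split; split.
- have [s [cs ss]] := @comp_chain q r n r0 h23 S0 PS0.
  by exists s; rewrite ss eS0.
- move=> s cs.
  have [us cmp] := @chain_comp q r n r0 s cs.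
  have -> : size s = #|[set x in s]| by rewrite cardsE; apply/esym/card_uniqP.
  apply: ub; apply/forall_inP => x; rewrite inE => xs; apply/forall_inP => y.
  rewrite inE => ys; apply/implyP; exact: cmp.
- by exists S0.
- exact: ub.
Qed.
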